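(* There are absolute constants $c_4,c_5,C_6 > 0$ such that for all sufficiently small $a > 0$ the following hold (with $h$ and $G_a$ as in the context). First, $h(e^{2\pi i t}) \in G_a$ for all real $t$ with $|t| \le c_4a$. Second, $|h(e^{2\pi i t})| \le 1-c_5\frac{|t|}{\log^2(a^{-1})}$ for all $t \in [-\frac{1}{2},\frac{1}{2}]\setminus [-C_6a^{1/2},C_6a^{1/2}]$.
   Context: For $a>0$ let $r = a^{-1/2}$ (floor functions omitted, so $r$ is a positive integer). Let $r_* \in \{1,\dots,r\}$ be such that $\sum_{j=1}^{r_*} \frac{1}{\log^2(j+3)}-\sum_{j=r_*+1}^r \frac{1}{\log^2(j+3)} \in [20,21]$. Let $\epsilon_j = +1$ for $1 \le j \le r_*$ and $\epsilon_j = -1$ for $r_*+1 \le j \le r$. Let $\lambda_a>0$ be such that $\sum_{j=1}^r \frac{\lambda_a}{j^2\log^2(j+3)} = 1$ and set $d_j = \frac{\lambda_a}{j^2\log^2(j+3)}$. Define $\widetilde{h}(z) = \widetilde{\lambda}_a\sum_{j=1}^r \epsilon_j d_j z^j$, where $\widetilde{\lambda}_a>0$ is chosen so that $\widetilde{h}(1) = 1$, and $h(z) = (1-a^{10})\widetilde{h}(z)$. Let $\alpha = e^{ia}$, $\beta = e^{-ia}$, and $G_a = \{z \in \mathbb{C} : \arg(\frac{\alpha-z}{z-\beta}) \in (\frac{a}{2},a)\}$ (principal argument). $\log$ is the natural logarithm. *)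

(* Defs.v *)
From Stdlib Require Import Reals.
From Coquelicot Require Import Coquelicot.
Open Scope R_scope.

Fixpoint sumR1 (f : nat -> R) (n : nat) : R :=
  match n with O => 0 | S m => sumR1 f m + f (S m) end.

Fixpoint sumC1 (f : nat -> C) (n : nat) : C :=
  match n with O => RtoC 0 | S m => Cplus (sumC1 f m) (f (S m)) end.

Definition r_of (a : R) : nat := Z.to_nat (Int_part (/ sqrt a)).

Definition cexpi (theta : R) : C := (cos theta, sin theta).

(* principal argument Arg w in (-PI, PI] (atan2); Arg 0 := 0 (irrelevant) *)
Definition Arg (w : C) : R :=
  let x := Re w in let y := Im w in
  match Rlt_dec 0 x with
  | left _ => atan (y / x)
  | right _ =>
    match Rlt_dec x 0 with
    | left _ => match Rle_dec 0 y with
                | left _ => atan (y / x) + PI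
                | right _ => atan (y / x) - PI
                end
    | right _ =>
      match Rlt_dec 0 y with
      | left _ => PI / 2
      | right _ => match Rlt_dec y 0 with
                   | left _ => - (PI / 2)
                   | right _ => 0
                   end
      end
    end
  end.

Definition G (a : R) (z : C) : Prop :=
  z <> cexpi (- a) /\ z <> cexpi a /\
  a / 2 < Arg (Cdiv (Cminus (cexpi a) z) (Cminus z (cexpi (- a)))) < a.

Definition eps (rstar j : nat) : R := if Nat.leb j rstar then 1 else -1.

Definition dcoef (lam : R) (j : nat) : R := lam / (INR j ^ 2 * ln (INR j + 3) ^ 2).

Definition htilde (r rstar : nat) (lam tlam : R) (z : C) : C :=
  Cmult (RtoC tlam)
        (sumC1 (fun j => Cmult (RtoC (eps rstar j * dcoef lam j)) (Cpow z j)) r).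

Definition hfun (a : R) (r rstar : nat) (lam tlam : R) (z : C) : C :=
  Cmult (RtoC (1 - a ^ 10)) (htilde r rstar lam tlam z).

(* Main.v *)
Require Import Defs.
From Stdlib Require Import Reals Lra Lia Psatz ZArith.
From Coquelicot Require Import Coquelicot.
Open Scope R_scope.

Lemma sumR1_S f n : sumR1 f (S n) = sumR1 f n + f (S n).
Proof. reflexivity. Qed.

Lemma sumR1_ext f g n : (forall j, (1 <= j <= n)%nat -> f j = g j) -> sumR1 f n = sumR1 g n.
Proof. induction n; simpl; intros H; auto. rewrite IHn by (intros; apply H; lia). rewrite H by lia. auto. Qed.

Lemma sumR1_le f g n : (forall j, (1 <= j <= n)%nat -> f j <= g j) -> sumR1 f n <= sumR1 g n.
Proof. induction n; simpl; intros H; [lra|]. assert (sumR1 f n <= sumR1 g n) by (apply IHn; intros; apply H; lia).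
 assert (f (S n) <= g (S n)) by (apply H; lia). lra. Qed.

Lemma sumR1_plus f g n : sumR1 (fun j => f j + g j) n = sumR1 f n + sumR1 g n.
Proof. induction n; simpl; [lra|]. rewrite IHn; lra. Qed.

Lemma sumR1_minus f g n : sumR1 (fun j => f j - g j) n = sumR1 f n - sumR1 g n.
Proof. induction n; simpl; [lra|]. rewrite IHn; lra. Qed.

Lemma sumR1_scal c f n : sumR1 (fun j => c * f j) n = c * sumR1 f n.
Proof. induction n; simpl; [lra|]. rewrite IHn; lra. Qed.

Lemma sumR1_const c n : sumR1 (fun _ => c) n = INR n * c.
Proof. induction n; cbn [sumR1]; [simpl; lra|]. rewrite IHn. rewrite S_INR; lra. Qed.

Lemma sumR1_nonneg f n : (forall j, (1 <= j <= n)%nat -> 0 <= f j) -> 0 <= sumR1 f n.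
Proof. intros H. replace 0 with (sumR1 (fun _ => 0) n). apply sumR1_le; auto.
 rewrite sumR1_const; lra. Qed.

Lemma sumR1_abs f n : Rabs (sumR1 f n) <= sumR1 (fun j => Rabs (f j)) n.
Proof. induction n; simpl. rewrite Rabs_R0; lra.
 eapply Rle_trans. apply Rabs_triang. lra. Qed.

Lemma sumR1_range_lo f m k lo : (forall j, (m < j <= m + k)%nat -> lo <= f j) ->
  INR k * lo <= sumR1 f (m + k) - sumR1 f m.
Proof. induction k; intros H. rewrite Nat.add_0_r; simpl; lra.
 rewrite Nat.add_succ_r. simpl sumR1 at 1. rewrite S_INR.
 assert (INR k * lo <= sumR1 f (m + k) - sumR1 f m) by (apply IHk; intros; apply H; lia).
 assert (lo <= f (S (m + k))) by (apply H; lia). lra. Qed.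

Lemma sumR1_range_hi f m k hi : (forall j, (m < j <= m + k)%nat -> f j <= hi) ->
  sumR1 f (m + k) - sumR1 f m <= INR k * hi.
Proof. induction k; intros H. rewrite Nat.add_0_r; simpl; lra.
 rewrite Nat.add_succ_r. simpl sumR1 at 1. rewrite S_INR.
 assert (sumR1 f (m + k) - sumR1 f m <= INR k * hi) by (apply IHk; intros; apply H; lia).
 assert (f (S (m + k)) <= hi) by (apply H; lia). lra. Qed.

Lemma sumR1_mono f m n : (m <= n)%nat -> (forall j, (m < j <= n)%nat -> 0 <= f j) ->
  sumR1 f m <= sumR1 f n.
Proof. intros Hmn H. replace n with (m + (n - m))%nat by lia.
 pose proof (sumR1_range_lo f m (n - m) 0). assert (INR (n-m) * 0 <= sumR1 f (m + (n - m)) - sumR1 f m).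
 apply H0. intros; apply H; lia. lra. Qed.

Lemma sumR1_eps rs g n : (rs <= n)%nat ->
  sumR1 (fun j => eps rs j * g j) n = 2 * sumR1 g rs - sumR1 g n.
Proof. intros H.
 assert (E: sumR1 (fun j => eps rs j * g j) rs = sumR1 g rs).
 { apply sumR1_ext. intros j Hj. unfold eps. replace (Nat.leb j rs) with true. lra.
   symmetry; apply Nat.leb_le; lia. }
 replace n with (rs + (n - rs))%nat by lia. generalize (n - rs)%nat. intro k. induction k.
 rewrite Nat.add_0_r, E. lra.
 rewrite Nat.add_succ_r. simpl. rewrite IHk. unfold eps. replace (Nat.leb (S (rs + k)) rs) with false. lra.
 symmetry; apply Nat.leb_gt; lia. Qed.

Lemma sumR1_split1 f n : (1 <= n)%nat ->
  sumR1 f n = f 1%nat + sumR1 (fun j => if Nat.eqb j 1 then 0 else f j) n.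
Proof. intros H. induction n. lia. destruct n. simpl. lra.
 cbn [sumR1]. cbn [sumR1] in IHn. rewrite IHn by lia. simpl. lra. Qed.

(* telescoping 1/j^2 *)
Lemma sum_inv_sq_tail n k : (1 <= n)%nat ->
  sumR1 (fun j => / INR j ^ 2) (n + k) - sumR1 (fun j => / INR j ^ 2) n <= / INR n - / INR (n + k).
Proof. intros Hn. induction k. rewrite Nat.add_0_r; lra.
 rewrite Nat.add_succ_r. cbn [sumR1].
 assert (1 <= INR (n + k)) by (apply (le_INR 1); lia).
 rewrite S_INR. set (x := INR (n+k)) in *.
 assert (/ (x+1)^2 <= / x - / (x + 1)).
 { replace (/ x - / (x+1)) with (/ (x * (x+1))) by (field; lra).
   apply Rinv_le_contravar. nra. nra. }
 lra. Qed.

Lemma sumR1_range_le f g m n : (m <= n)%nat -> (forall j, (m < j <= n)%nat -> f j <= g j) ->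
  sumR1 f n - sumR1 f m <= sumR1 g n - sumR1 g m.
Proof. intros Hmn H. replace n with (m + (n - m))%nat by lia.
 pose proof (sumR1_range_lo (fun j => g j - f j) m (n - m) 0) as H1.
 rewrite !sumR1_minus in H1. assert (INR (n - m) * 0 <= sumR1 g (m + (n - m)) - sumR1 f (m + (n - m)) -
    (sumR1 g m - sumR1 f m)). apply H1. intros. assert (f j <= g j) by (apply H; lia). lra. lra. Qed.

Lemma cexpi_pow th j : Cpow (cexpi th) j = cexpi (INR j * th).
Proof. induction j.
 - simpl. unfold cexpi. rewrite Rmult_0_l, cos_0, sin_0. reflexivity.
 - change (Cpow (cexpi th) (S j)) with (Cmult (cexpi th) (Cpow (cexpi th) j)). rewrite IHj.
   unfold cexpi, Cmult. simpl fst; simpl snd. rewrite S_INR.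
   replace ((INR j + 1) * th) with (INR j * th + th) by ring.
   rewrite cos_plus, sin_plus. f_equal; ring. Qed.

Lemma sumC1_cexpi (u : nat -> R) th n :
  sumC1 (fun j => Cmult (RtoC (u j)) (Cpow (cexpi th) j)) n =
  (sumR1 (fun j => u j * cos (INR j * th)) n, sumR1 (fun j => u j * sin (INR j * th)) n).
Proof. induction n. reflexivity.
 cbn [sumC1 sumR1]. rewrite IHn, cexpi_pow. unfold Cplus, Cmult, cexpi, RtoC. simpl. f_equal; ring. Qed.

Definition cf rs lam j := eps rs j * dcoef lam j.
Definition Xs r rs lam th := sumR1 (fun j => cf rs lam j * cos (INR j * th)) r.
Definition Ys r rs lam th := sumR1 (fun j => cf rs lam j * sin (INR j * th)) r.

Lemma htilde_cexpi r rs lam tlam th :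
  htilde r rs lam tlam (cexpi th) = (tlam * Xs r rs lam th, tlam * Ys r rs lam th).
Proof. unfold htilde. rewrite (sumC1_cexpi (cf rs lam)). unfold Cmult, RtoC, Xs, Ys, cf. simpl. f_equal; ring. Qed.

Lemma hfun_cexpi a r rs lam tlam th :
  hfun a r rs lam tlam (cexpi th) =
  ((1 - a^10) * tlam * Xs r rs lam th, (1 - a^10) * tlam * Ys r rs lam th).
Proof. unfold hfun. rewrite htilde_cexpi. unfold Cmult, RtoC. simpl. f_equal; ring. Qed.

Lemma RtoC1_cexpi : RtoC 1 = cexpi 0.
Proof. unfold cexpi. rewrite cos_0, sin_0. reflexivity. Qed.

Lemma Xs0 r rs lam : Xs r rs lam 0 = sumR1 (cf rs lam) r.
Proof. unfold Xs. apply sumR1_ext. intros. rewrite Rmult_0_r, cos_0. ring. Qed.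

Lemma htilde1 r rs lam tlam : htilde r rs lam tlam (RtoC 1) = RtoC 1 -> tlam * sumR1 (cf rs lam) r = 1.
Proof. rewrite RtoC1_cexpi, htilde_cexpi, Xs0. intros H. injection H as H1 H2. rewrite H1; apply cos_0. Qed.

Lemma rot_sum_bound (u phi : nat -> R) n :
  (sumR1 (fun j => u j * cos (phi j)) n)^2 + (sumR1 (fun j => u j * sin (phi j)) n)^2
  <= (sumR1 (fun j => Rabs (u j)) n)^2.
Proof. induction n. simpl. lra.
 cbn [sumR1]. set (A := sumR1 (fun j => u j * cos (phi j)) n) in *.
 set (B := sumR1 (fun j => u j * sin (phi j)) n) in *.
 set (M := sumR1 (fun j => Rabs (u j)) n) in *.
 assert (HM : 0 <= M) by (apply sumR1_nonneg; intros; apply Rabs_pos).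
 set (v := u (S n)). set (c := cos (phi (S n))). set (s := sin (phi (S n))).
 assert (Hcs : c^2 + s^2 = 1) by (unfold c, s; pose proof (sin2_cos2 (phi (S n))); unfold Rsqr in *; lra).
 assert (Hid : (A * c + B * s)^2 + (A * s - B * c)^2 = (A^2 + B^2) * (c^2 + s^2)) by ring.
 assert (Hcb : (A * c + B * s)^2 <= M^2) by (pose proof (pow2_ge_0 (A*s-B*c)); rewrite Hcs, Rmult_1_r in Hid; lra).
 assert (Hab : Rabs (A * c + B * s) <= M).
 { destruct (Rcase_abs (A * c + B * s)); [rewrite Rabs_left|rewrite Rabs_right]; nra. }
 assert (v * (A * c + B * s) <= Rabs v * M).
 { eapply Rle_trans. apply Rle_abs. rewrite Rabs_mult. apply Rmult_le_compat_l. apply Rabs_pos. exact Hab. }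
 assert (v^2 = Rabs v ^2) by (rewrite pow2_abs; auto).
 replace ((A + v * c)^2 + (B + v * s)^2) with (A^2 + B^2 + 2 * (v * (A * c + B * s)) + v^2 * (c^2+s^2)) by ring.
 rewrite Hcs. replace ((M + Rabs v)^2) with (M^2 + 2 * (Rabs v * M) + Rabs v ^2) by ring. lra. Qed.

Lemma Arg_pos_re w : 0 < fst w -> Arg w = atan (snd w / fst w).
Proof. intros H. unfold Arg. destruct (Rlt_dec 0 (Re w)). reflexivity. unfold Re in n. lra. Qed.

Lemma G_suff a x y : 0 < a < 1 -> 0 < 1 - (x^2 + y^2) -> 1 - (x^2 + y^2) < 2 * (x - cos a) -> G a (x, y).
Proof. intros Ha Hr Hu.
 pose proof PI2_1 as Hpi.
 set (c := cos a) in *. set (s := sin a) in *. set (h := a / 2) in *.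
 assert (Hc : 0 < c) by (apply cos_gt_0; lra).
 assert (Hs : 0 < s) by (apply sin_gt_0; lra).
 assert (Hsh : 0 < sin h) by (apply sin_gt_0; unfold h; lra).
 assert (Hch : 0 < cos h) by (apply cos_gt_0; unfold h; lra).
 assert (Hcs : s^2 + c^2 = 1) by (unfold s, c; pose proof (sin2_cos2 a); unfold Rsqr in *; lra).
 assert (Hcsh : sin h ^2 + cos h^2 = 1) by (pose proof (sin2_cos2 h); unfold Rsqr in *; lra).
 assert (Es : s = 2 * sin h * cos h) by (unfold s; replace a with (2 * h) by (unfold h; lra); apply sin_2a).
 assert (Ec : c = 1 - 2 * sin h * sin h) by (unfold c; replace a with (2 * h) by (unfold h; lra); apply cos_2a_sin).
 set (u := x - c) in *. set (rho := 1 - (x^2 + y^2)) in *.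
 assert (Hu0 : 0 < u) by (unfold u, rho in *; lra).
 assert (HReN : s^2 - y^2 - u^2 = 2 * c * u + rho) by (unfold u, rho; nra).
 set (ReN := s^2 - y^2 - u^2). set (ImN := 2 * s * u).
 assert (HReNp : 0 < ReN) by (unfold ReN; rewrite HReN; nra).
 set (den := u^2 + (y + s)^2).
 assert (Hden : 0 < den) by (unfold den; pose proof (pow2_ge_0 (y+s)); assert (0 < u^2) by (apply pow_lt; lra); lra).
 assert (Ew1 : fst (Cdiv (Cminus (cexpi a) (x, y)) (Cminus (x, y) (cexpi (- a)))) = ReN / den).
 { unfold Cdiv, Cminus, Cmult, Cinv, Cplus, Copp, cexpi. simpl. rewrite cos_neg, sin_neg. fold c s.
   unfold ReN, den, u. field. fold u. fold den. lra. }
 assert (Ew2 : snd (Cdiv (Cminus (cexpi a) (x, y)) (Cminus (x, y) (cexpi (- a)))) = ImN / den).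
 { unfold Cdiv, Cminus, Cmult, Cinv, Cplus, Copp, cexpi. simpl. rewrite cos_neg, sin_neg. fold c s.
   unfold ImN, den, u. field. fold u. fold den. lra. }
 assert (Hx2 : x^2 + y^2 < 1) by (unfold rho in Hr; lra).
 split; [|split].
 - unfold cexpi. rewrite cos_neg, sin_neg. intros E. injection E as E1 E2. change (cos a) with c in E1, E2; change (sin a) with s in E1, E2.
   rewrite E1, E2 in Hx2. nra.
 - unfold cexpi. intros E. injection E as E1 E2. change (cos a) with c in E1, E2; change (sin a) with s in E1, E2.
   rewrite E1, E2 in Hx2. nra.
 - rewrite Arg_pos_re by (rewrite Ew1; apply Rdiv_lt_0_compat; lra).
   rewrite Ew1, Ew2. replace (ImN / den / (ReN / den)) with (ImN / ReN) by (field; lra).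
   assert (Ht1 : tan a = s / c) by reflexivity.
   assert (Ht2 : tan h = sin h / cos h) by reflexivity.
   split.
   + replace (a / 2) with (atan (tan h)) by (apply atan_tan; unfold h; lra).
     apply atan_increasing. rewrite Ht2.
     apply (Rmult_lt_reg_r (cos h * ReN)). nra.
     replace (sin h / cos h * (cos h * ReN)) with (sin h * ReN) by (field; lra).
     replace (ImN / ReN * (cos h * ReN)) with (ImN * cos h) by (field; lra).
     unfold ImN, ReN. rewrite HReN.
     assert (2 * s * u * cos h - sin h * (2 * c * u + rho) = sin h * (2 * u - rho)).
     { assert (E : 2 * s * u * cos h - sin h * (2 * c * u + rho) - sin h * (2 * u - rho)
          = 4 * sin h * u * (sin h^2 + cos h^2 - 1)) by (rewrite Es, Ec; ring).
       rewrite Hcsh in E. lra. }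
     assert (0 < sin h * (2 * u - rho)) by (apply Rmult_lt_0_compat; unfold rho, u in *; lra).
     lra.
   + apply Rlt_le_trans with (atan (tan a)); [|rewrite atan_tan; lra].
     apply atan_increasing. rewrite Ht1.
     apply (Rmult_lt_reg_r (c * ReN)). nra.
     replace (s / c * (c * ReN)) with (s * ReN) by (field; lra).
     replace (ImN / ReN * (c * ReN)) with (ImN * c) by (field; lra).
     unfold ImN, ReN. rewrite HReN. unfold rho in *. nra.
Qed.

Lemma ln_le_xm1 x : 0 < x -> ln x <= x - 1.
Proof. intros H. rewrite <- (ln_exp (x - 1)). apply ln_le. auto.
 pose proof (exp_ineq1_le (x - 1)). lra. Qed.

Lemma exp1_bounds : 2 <= exp 1 <= 3.
Proof. split. pose proof (exp_ineq1_le 1). lra. apply exp_le_3. Qed.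

Lemma ln_ge1 x : 3 <= x -> 1 <= ln x.
Proof. intros H. rewrite <- (ln_exp 1). apply ln_le. apply exp_pos. pose proof exp1_bounds; lra. Qed.

Lemma ln_le_ub x y : 0 < x -> x <= exp y -> ln x <= y.
Proof. intros. rewrite <- (ln_exp y). apply ln_le; auto. Qed.

Lemma ln4_bounds : 1 <= ln 4 <= 2.
Proof. split. apply ln_ge1; lra. apply ln_le_ub. lra.
 replace 2 with (1 + 1) by lra. rewrite exp_plus. pose proof exp1_bounds; nra. Qed.

Lemma ln_pos_j j : 1 <= ln (INR j + 3).
Proof. apply ln_ge1. pose proof (pos_INR j); lra. Qed.

Definition Sl n := sumR1 (fun j => / ln (INR j + 3) ^ 2) n.

Lemma dcoef_pos lam j : 0 < lam -> (1 <= j)%nat -> 0 < dcoef lam j.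
Proof. intros. unfold dcoef. assert (1 <= INR j) by (apply (le_INR 1); lia).
 pose proof (ln_pos_j j). apply Rdiv_lt_0_compat; auto. apply Rmult_lt_0_compat; apply pow_lt; lra. Qed.

Lemma Sl_le_n n : Sl n <= INR n.
Proof. unfold Sl. rewrite <- (Rmult_1_r (INR n)), <- sumR1_const. apply sumR1_le.
 intros. pose proof (ln_pos_j j). rewrite <- (Rinv_1). apply Rinv_le_contravar. lra. nra. Qed.

Lemma sum_inv_sq_le2 n : sumR1 (fun j => / INR j ^ 2) n <= 2.
Proof. destruct n. simpl. lra.
 pose proof (sum_inv_sq_tail 1 n (le_n 1)) as H.
 replace (1 + n)%nat with (S n) in H by lia.
 assert (E1 : sumR1 (fun j => / INR j ^ 2) 1 = 1) by (simpl; field).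
 assert (0 < / INR (S n)) by (apply Rinv_0_lt_compat, lt_0_INR; lia).
 assert (E2 : / INR 1 = 1) by (simpl; field). lra. Qed.

Lemma lam_bounds lam r : 0 < lam -> (1 <= r)%nat -> sumR1 (dcoef lam) r = 1 -> 1/2 <= lam <= ln 4 ^ 2.
Proof. intros Hl Hr Hs.
 set (g := fun j => / (INR j ^ 2 * ln (INR j + 3) ^ 2)).
 assert (E : sumR1 (dcoef lam) r = lam * sumR1 g r).
 { rewrite <- sumR1_scal. apply sumR1_ext. intros. unfold dcoef, g. field.
   pose proof (ln_pos_j j). assert (1 <= INR j) by (apply (le_INR 1); lia). repeat split; try lra. }
 assert (Hg1 : g 1%nat <= sumR1 g r).
 { assert (Eg : sumR1 g 1 = g 1%nat) by (simpl; ring).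
   pose proof (sumR1_mono g 1 r Hr) as Hm. assert (sumR1 g 1 <= sumR1 g r). apply Hm.
   intros. unfold g. apply Rlt_le, Rinv_0_lt_compat. pose proof (ln_pos_j j).
   assert (1 <= INR j) by (apply (le_INR 1); lia). apply Rmult_lt_0_compat; apply pow_lt; lra.
   lra. }
 assert (Hg2 : sumR1 g r <= 2).
 { eapply Rle_trans; [|apply (sum_inv_sq_le2 r)]. apply sumR1_le. intros. unfold g.
   pose proof (ln_pos_j j). assert (1 <= INR j) by (apply (le_INR 1); lia).
   apply Rinv_le_contravar. apply pow_lt; lra. rewrite <- (Rmult_1_r (INR j ^2)) at 1.
   apply Rmult_le_compat_l. apply pow_le; lra. nra. }
 assert (Eg1 : g 1%nat = / ln 4 ^ 2). { unfold g. simpl. replace (1+3) with 4 by lra. field.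
   pose proof ln4_bounds; lra. }
 pose proof ln4_bounds.
 split.
 - assert (lam * 2 >= 1) by (rewrite <- Hs, E; nra). lra.
 - rewrite Eg1 in Hg1. assert (1 >= lam * / ln 4 ^ 2) by (rewrite <- Hs, E; nra).
   assert (0 < ln 4 ^ 2) by nra.
   apply (Rmult_le_reg_r (/ ln 4 ^ 2)). apply Rinv_0_lt_compat; auto. rewrite Rinv_r by lra. lra.
Qed.

Lemma ln_step x : 0 <= x -> ln (x + 4) - ln (x + 3) >= / (x + 4).
Proof. intros Hx. assert (ln ((x+3)/(x+4)) <= (x+3)/(x+4) - 1) by (apply ln_le_xm1; apply Rdiv_lt_0_compat; lra).
 rewrite ln_div in H by lra. replace ((x+3)/(x+4) - 1) with (- / (x+4)) in H by (field; lra). lra. Qed.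

Lemma T_step x : 1 <= x -> / ((x + 1) * ln (x + 4) ^ 2) <= 5/2 * (/ ln (x + 3) - / ln (x + 4)).
Proof. intros Hx. pose proof (ln_step x) as Hs.
 assert (HA : 1 <= ln (x + 3)) by (apply ln_ge1; lra).
 assert (HAB : ln (x + 3) <= ln (x + 4)) by (apply ln_le; lra).
 set (A := ln (x + 3)) in *. set (B := ln (x + 4)) in *.
 assert (B - A >= / (x+4)) by (apply Hs; lra).
 replace (/ A - / B) with ((B - A) / (A * B)) by (field; lra).
 apply Rle_trans with (5/2 * (/ (x + 4) / (B * B))).
 - replace (/ ((x + 1) * B ^ 2)) with (/ (x+1) * / (B * B)) by (field; lra).
   replace (5 / 2 * (/ (x + 4) / (B * B))) with ((5/2) / (x+4) * / (B * B)) by (field; lra).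
   apply Rmult_le_compat_r. apply Rlt_le, Rinv_0_lt_compat; nra.
   apply (Rmult_le_reg_r ((x+1)*(x+4))). nra.
   replace (/ (x + 1) * ((x + 1) * (x + 4))) with (x + 4) by (field; lra).
   replace (5 / 2 / (x + 4) * ((x + 1) * (x + 4))) with (5/2 * (x+1)) by (field; lra). lra.
 - apply Rmult_le_compat_l. lra. unfold Rdiv. apply Rmult_le_compat.
   apply Rlt_le, Rinv_0_lt_compat; lra. apply Rlt_le, Rinv_0_lt_compat; nra. lra.
   apply Rinv_le_contravar; nra. Qed.

Lemma T_bound_aux n : (1 <= n)%nat ->
  sumR1 (fun j => / (INR j * ln (INR j + 3)^2)) n <= / ln 4 ^ 2 + 5/2 * (/ ln 4 - / ln (INR n + 3)).
Proof. intros Hn. induction n. lia. destruct n.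
 - cbn [sumR1]. change (INR 1) with 1. replace (1 + 3) with 4 by lra.
   assert (0 < ln 4) by (pose proof ln4_bounds; lra). replace (/ ln 4 - / ln 4) with 0 by ring.
   replace (/ (1 * ln 4 ^ 2)) with (/ ln 4 ^ 2) by (field; lra). lra.
 - rewrite sumR1_S. assert (IH := IHn ltac:(lia)).
   pose proof (T_step (INR (S n))) as Hst.
   assert (1 <= INR (S n)) by (apply (le_INR 1); lia).
   rewrite (S_INR (S n)). replace (INR (S n) + 1 + 3) with (INR (S n) + 4) by ring.
   specialize (Hst H). lra. Qed.

Lemma T_bound n : sumR1 (fun j => / (INR j * ln (INR j + 3)^2)) n <= / ln 4 ^ 2 + 5/2 * / ln 4.
Proof. pose proof ln4_bounds. assert (0 < / ln 4 ^ 2) by (apply Rinv_0_lt_compat; nra).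
 assert (0 < / ln 4) by (apply Rinv_0_lt_compat; nra).
 destruct n. cbn [sumR1]. lra. pose proof (T_bound_aux (S n) ltac:(lia)).
 assert (0 < / ln (INR (S n) + 3)). apply Rinv_0_lt_compat. pose proof (ln_pos_j (S n)); lra. lra. Qed.

Lemma lamT2 lam n : 0 < lam -> lam <= ln 4 ^ 2 ->
  lam * (sumR1 (fun j => / (INR j * ln (INR j + 3)^2)) n)^2 <= 49/4.
Proof. intros Hl Hl4. pose proof (T_bound n). pose proof ln4_bounds.
 set (T := sumR1 (fun j => / (INR j * ln (INR j + 3)^2)) n) in *.
 assert (0 <= T). { apply sumR1_nonneg. intros. apply Rlt_le, Rinv_0_lt_compat.
   assert (1 <= INR j) by (apply (le_INR 1); lia). pose proof (ln_pos_j j). apply Rmult_lt_0_compat; nra. }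
 set (l := ln 4) in *. assert (T * l <= / l + 5/2).
 { replace (/ l + 5/2) with ((/ l ^ 2 + 5/2 * / l) * l) by (field; lra). apply Rmult_le_compat_r; lra. }
 assert (/ l <= 1). { rewrite <- Rinv_1. apply Rinv_le_contravar; lra. }
 assert (T * l <= 7/2) by lra.
 assert (lam * T^2 <= l^2 * T^2) by (apply Rmult_le_compat_r; nra).
 assert (l^2 * T^2 = (T*l)^2) by ring. assert (0 <= T * l) by nra. nra. Qed.

Lemma Sl_thresh n T : 0 <= T -> Sl n <= T + INR n / ln (T + 3) ^ 2.
Proof. intros HT. assert (HlT : 1 <= ln (T + 3)) by (apply ln_ge1; lra).
 assert (0 < ln (T+3)^2) by nra.
 induction n. unfold Sl. cbn [sumR1]. simpl INR. unfold Rdiv. lra.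
 unfold Sl in *. rewrite sumR1_S. rewrite S_INR.
 destruct (Rle_dec (INR (S n)) T) as [Hle|Hgt].
 - pose proof (Sl_le_n (S n)) as Hs. unfold Sl in Hs. rewrite sumR1_S in Hs.
   rewrite S_INR in Hle. assert (0 <= (INR n + 1) / ln (T + 3) ^ 2).
   { apply Rdiv_le_0_compat; [pose proof (pos_INR n)|]; lra. } rewrite S_INR in Hs. lra.
 - assert (/ ln (INR (S n) + 3) ^ 2 <= / ln (T + 3) ^ 2).
   { apply Rinv_le_contravar. auto. assert (ln (T + 3) <= ln (INR (S n) + 3)) by (apply ln_le; lra). nra. }
   rewrite S_INR in H0. unfold Rdiv in *. lra. Qed.

Lemma Sl_range_lo m n : (m <= n)%nat -> (INR n - INR m) / ln (INR n + 3) ^ 2 <= Sl n - Sl m.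
Proof. intros Hmn. unfold Sl. replace n with (m + (n - m))%nat at 2 3 by lia.
 replace (INR n - INR m) with (INR (n - m)) by (rewrite minus_INR; auto).
 unfold Rdiv. apply sumR1_range_lo. intros j Hj.
 assert (1 <= ln (INR j + 3)) by apply ln_pos_j.
 assert (ln (INR j + 3) <= ln (INR n + 3)). { apply ln_le. pose proof (pos_INR j); lra.
   assert (INR j <= INR n) by (apply le_INR; lia). lra. }
 replace (m + (n - m))%nat with n by lia. apply Rinv_le_contravar; nra. Qed.

Lemma N_bound lam rs r : 0 < lam -> (1 <= rs <= r)%nat ->
  sumR1 (dcoef lam) r - sumR1 (dcoef lam) rs <= lam / ln (INR rs + 4) ^ 2 * / INR rs.
Proof. intros Hl Hr. set (K := lam / ln (INR rs + 4) ^ 2).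
 assert (HK : 0 <= K). { unfold K. apply Rdiv_le_0_compat. lra. apply pow_lt.
   pose proof (ln_ge1 (INR rs + 4)). pose proof (pos_INR rs). lra. }
 eapply Rle_trans. apply (sumR1_range_le _ (fun j => K * / INR j ^ 2)). lia.
 - intros j Hj. unfold dcoef, K. assert (1 <= INR j) by (apply (le_INR 1); lia).
   assert (INR rs + 1 <= INR j) by (rewrite <- S_INR; apply le_INR; lia).
   assert (1 <= ln (INR rs + 4)) by (apply ln_ge1; pose proof (pos_INR rs); lra).
   assert (ln (INR rs + 4) <= ln (INR j + 3)) by (apply ln_le; pose proof (pos_INR rs); lra).
   unfold Rdiv. rewrite Rinv_mult. rewrite (Rmult_comm (/ INR j ^2)). rewrite Rmult_assoc.
   apply Rmult_le_compat_l. lra. apply Rmult_le_compat_r. apply Rlt_le, Rinv_0_lt_compat. nra.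
   apply Rinv_le_contravar; nra.
 - rewrite !sumR1_scal. pose proof (sum_inv_sq_tail rs (r - rs) ltac:(lia)).
   replace (rs + (r - rs))%nat with r in H by lia.
   assert (0 < / INR r) by (apply Rinv_0_lt_compat, lt_0_INR; lia).
   assert (sumR1 (fun j => / INR j ^ 2) r - sumR1 (fun j => / INR j ^ 2) rs <= / INR rs) by lra.
   replace (K * sumR1 (fun j => / INR j ^ 2) r - K * sumR1 (fun j => / INR j ^ 2) rs) with
     (K * (sumR1 (fun j => / INR j ^ 2) r - sumR1 (fun j => / INR j ^ 2) rs)) by ring.
   apply Rmult_le_compat_l; auto. Qed.

Lemma rs_large R r rs : 2^40 <= R -> INR r <= R < INR r + 1 -> (rs <= r)%nat ->
  Sl r - Sl rs <= Sl rs -> R / 34 <= INR rs.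
Proof. intros HR [Hr1 Hr2] Hrs Hh.
 assert (HR0 : 0 < R) by lra.
 set (s2 := sqrt R). set (s1 := sqrt s2). set (s := sqrt s1).
 assert (Hs2 : 0 < s2) by (apply sqrt_lt_R0; lra).
 assert (Hs1 : 0 < s1) by (apply sqrt_lt_R0; lra).
 assert (Hs0 : 0 < s) by (apply sqrt_lt_R0; lra).
 assert (E2 : s2 * s2 = R) by (apply sqrt_sqrt; lra).
 assert (E1 : s1 * s1 = s2) by (apply sqrt_sqrt; lra).
 assert (E0 : s * s = s1) by (apply sqrt_sqrt; lra).
 assert (ER : R = s^8) by (rewrite <- E2, <- E1, <- E0; ring).
 assert (Hs32 : 32 <= s).
 { destruct (Rle_dec 32 s); auto. exfalso. assert (s^8 < 32^8).
   { assert (s^7 <= 32^7) by (apply pow_incr; lra). replace (s^8) with (s * s^7) by ring.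
     replace (32^8) with (32 * 32^7) by ring. assert (0 < s^7) by (apply pow_lt; lra). nra. } lra. }
 set (m := ln s).
 assert (Hm1 : 1 <= m) by (apply ln_ge1; lra).
 assert (Hms : m <= s - 1) by (apply ln_le_xm1; lra).
 assert (ElR : ln R = 8 * m) by (rewrite ER, ln_pow by lra; simpl INR; unfold m; ring).
 assert (ElT : ln (s^4) = 4 * m) by (rewrite ln_pow by lra; simpl INR; unfold m; ring).
 pose proof (Sl_thresh rs (s^4) ltac:(apply pow_le; lra)) as Hth.
 assert (HlT : 4 * m <= ln (s^4 + 3)) by (rewrite <- ElT; apply ln_le; [apply pow_lt; lra| lra]).
 assert (Hth2 : Sl rs <= s^4 + INR rs / (16 * m^2)).
 { eapply Rle_trans; [apply Hth|]. apply Rplus_le_compat_l. unfold Rdiv. apply Rmult_le_compat_l.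
   apply pos_INR. apply Rinv_le_contravar. nra. nra. }
 pose proof (Sl_range_lo rs r Hrs) as Hlo.
 assert (Hlr : ln (INR r + 3) <= 16 * m).
 { replace (16 * m) with (ln (R * R)) by (rewrite ln_mult by lra; lra).
   apply ln_le. pose proof (pos_INR r); lra. nra. }
 assert (Hlr1 : 1 <= ln (INR r + 3)) by apply ln_pos_j.
 assert (Hrr : INR rs <= INR r) by (apply le_INR; auto).
 assert (Hd : INR r - INR rs <= (16 * m)^2 * (Sl r - Sl rs)).
 { apply Rle_trans with (ln (INR r + 3) ^ 2 * (Sl r - Sl rs)).
   - apply (Rmult_le_reg_r (/ ln (INR r + 3) ^ 2)). apply Rinv_0_lt_compat. nra.
     replace (ln (INR r + 3) ^ 2 * (Sl r - Sl rs) * / ln (INR r + 3) ^ 2) with (Sl r - Sl rs) by (field; lra).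
     exact Hlo.
   - apply Rmult_le_compat_r. unfold Rdiv in Hlo. assert (0 <= (INR r - INR rs) * / ln (INR r + 3) ^ 2).
     apply Rmult_le_pos. lra. apply Rlt_le, Rinv_0_lt_compat; nra. lra. nra. }
 assert (Hd2 : INR r - INR rs <= 256 * m^2 * s^4 + 16 * INR rs).
 { assert ((16 * m)^2 * (Sl r - Sl rs) <= (16*m)^2 * (s^4 + INR rs / (16 * m^2))).
   { apply Rmult_le_compat_l. nra. lra. }
   replace ((16*m)^2 * (s^4 + INR rs / (16 * m^2))) with (256 * m^2 * s^4 + 16 * INR rs) in H by (field; lra).
   lra. }
 assert (m^2 <= s^2) by nra.
 assert (256 * m^2 * s^4 <= 256 * s^6) by (replace (s^6) with (s^2 * s^4) by ring; assert (0 <= s^4) by (apply pow_le; lra); nra).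
 assert (s^8 / 2 >= 256 * s^6 + 1).
 { assert (1024 <= s^2) by nra. assert (1 <= s^6) by (apply pow_R1_Rle; lra).
   replace (s^8) with (s^2 * s^6) by ring. nra. }
 rewrite ER. lra. Qed.

Lemma cf_abs rs lam j : 0 < lam -> (1 <= j)%nat -> Rabs (cf rs lam j) = dcoef lam j.
Proof. intros. unfold cf, eps. pose proof (dcoef_pos lam j H H0).
 destruct (Nat.leb j rs); rewrite Rabs_mult, (Rabs_right (dcoef lam j)) by lra;
 [rewrite Rabs_R1 | rewrite Rabs_left by lra]; ring. Qed.

Lemma cf_le rs lam j : (j <= rs)%nat -> cf rs lam j = dcoef lam j.
Proof. intros. unfold cf, eps. replace (Nat.leb j rs) with true. ring. symmetry; apply Nat.leb_le; auto. Qed.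

Lemma Q_bound r rs lam th lo hi :
  0 < lam -> (1 <= rs <= r)%nat -> sumR1 (dcoef lam) r = 1 -> (2 <= lo <= hi)%nat -> (hi <= rs)%nat ->
  (forall j, (lo <= j <= hi)%nat -> cos (INR j * th - th) <= 3/4) ->
  Xs r rs lam th ^2 + Ys r rs lam th ^2 <=
  1 - dcoef lam 1 * (sumR1 (dcoef lam) hi - sumR1 (dcoef lam) (lo - 1)) / 2.
Proof. intros Hl Hr Hs Hlo Hhi Hcos.
 set (X := Xs r rs lam th). set (Y := Ys r rs lam th).
 set (phi := fun j => INR j * th - th).
 set (W := sumR1 (fun j => cf rs lam j * cos (phi j)) r).
 set (Z := sumR1 (fun j => cf rs lam j * sin (phi j)) r).
 assert (EW : W = X * cos th + Y * sin th).
 { unfold W, X, Y, Xs, Ys. rewrite <- !(Rmult_comm (cos th)), <- !(Rmult_comm (sin th)).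
   rewrite <- !sumR1_scal, <- sumR1_plus. apply sumR1_ext. intros. unfold phi. rewrite cos_minus. ring. }
 assert (EZ : Z = Y * cos th - X * sin th).
 { unfold Z, X, Y, Xs, Ys. rewrite <- !(Rmult_comm (cos th)), <- !(Rmult_comm (sin th)).
   rewrite <- !sumR1_scal, <- sumR1_minus. apply sumR1_ext. intros. unfold phi. rewrite sin_minus. ring. }
 assert (Hcs : cos th ^2 + sin th ^2 = 1) by (pose proof (sin2_cos2 th); unfold Rsqr in *; lra).
 assert (EQ : X^2 + Y^2 = W^2 + Z^2).
 { rewrite EW, EZ. transitivity ((X^2 + Y^2) * (cos th ^2 + sin th ^2)). rewrite Hcs; ring. ring. }
 set (u := fun j => if Nat.eqb j 1 then 0 else cf rs lam j).
 set (d1 := dcoef lam 1).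
 assert (Hd1 : 0 < d1) by (apply dcoef_pos; auto).
 assert (Ecf1 : cf rs lam 1 = d1) by (apply cf_le; lia).
 assert (Ephi1 : phi 1%nat = 0) by (unfold phi; simpl; ring).
 set (W2 := sumR1 (fun j => u j * cos (phi j)) r).
 set (Z2 := sumR1 (fun j => u j * sin (phi j)) r).
 assert (EW2 : W = d1 + W2).
 { unfold W. rewrite sumR1_split1 by lia. rewrite Ecf1, Ephi1, cos_0. unfold W2. f_equal. ring.
   apply sumR1_ext. intros. unfold u. destruct (Nat.eqb j 1); ring. }
 assert (EZ2 : Z = Z2).
 { unfold Z. rewrite sumR1_split1 by lia. rewrite Ephi1, sin_0. unfold Z2. rewrite Rmult_0_r, Rplus_0_l.
   apply sumR1_ext. intros. unfold u. destruct (Nat.eqb j 1); ring. }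
 set (dd := fun j => if Nat.eqb j 1 then 0 else dcoef lam j).
 assert (Edd : sumR1 dd r = 1 - d1).
 { rewrite <- Hs. rewrite (sumR1_split1 (dcoef lam)) by lia. unfold d1, dd. ring. }
 assert (Hrot : W2^2 + Z2^2 <= (1 - d1)^2).
 { rewrite <- Edd. replace (sumR1 dd r) with (sumR1 (fun j => Rabs (u j)) r). apply rot_sum_bound.
   apply sumR1_ext. intros j Hj. unfold u, dd. destruct (Nat.eqb j 1). apply Rabs_R0. apply cf_abs; auto; lia. }
 set (g := fun j => if andb (Nat.leb lo j) (Nat.leb j hi) then dcoef lam j * (1 - cos (phi j)) else 0).
 assert (Hg0 : forall j, (1 <= j)%nat -> 0 <= g j).
 { intros. unfold g. destruct (andb _ _). apply Rmult_le_pos. apply Rlt_le, dcoef_pos; auto.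
   pose proof (COS_bound (phi j)); lra. lra. }
 assert (HW2 : W2 <= sumR1 dd r - sumR1 g r).
 { rewrite <- sumR1_minus. apply sumR1_le. intros j Hj. unfold u, dd, g.
   destruct (Nat.eqb j 1) eqn:E1.
   - apply Nat.eqb_eq in E1. subst j. replace (Nat.leb lo 1) with false by (symmetry; apply Nat.leb_gt; lia).
     simpl. lra.
   - destruct (andb (Nat.leb lo j) (Nat.leb j hi)) eqn:E2.
     + apply andb_prop in E2. destruct E2 as [E2 E3]. apply Nat.leb_le in E2, E3.
       rewrite cf_le by lia. lra.
     + rewrite Rminus_0_r. rewrite <- (cf_abs rs lam j) by (auto; lia).
       eapply Rle_trans. apply Rle_abs. rewrite Rabs_mult. pose proof (COS_bound (phi j)).
       assert (Rabs (cos (phi j)) <= 1) by (apply Rabs_le; lra).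
       pose proof (Rabs_pos (cf rs lam j)). nra. }
 set (Dsum := sumR1 (dcoef lam) hi - sumR1 (dcoef lam) (lo - 1)).
 assert (Hgs : Dsum / 4 <= sumR1 g r).
 { assert (sumR1 g hi <= sumR1 g r) by (apply sumR1_mono; [lia| intros; apply Hg0; lia]).
   assert (0 <= sumR1 g (lo - 1)) by (apply sumR1_nonneg; intros; apply Hg0; lia).
   assert (sumR1 (fun j => dcoef lam j / 4) hi - sumR1 (fun j => dcoef lam j / 4) (lo - 1)
           <= sumR1 g hi - sumR1 g (lo - 1)).
   { apply sumR1_range_le. lia. intros j Hj. unfold g.
     replace (andb (Nat.leb lo j) (Nat.leb j hi)) with true.
     2:{ symmetry. apply andb_true_intro. split; apply Nat.leb_le; lia. }
     assert (cos (phi j) <= 3/4) by (apply Hcos; lia). pose proof (dcoef_pos lam j Hl ltac:(lia)). nra. }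
   assert (E4 : forall n, sumR1 (fun j => dcoef lam j / 4) n = sumR1 (dcoef lam) n / 4).
   { intros. unfold Rdiv. rewrite <- (Rmult_comm (/4)), <- sumR1_scal. apply sumR1_ext; intros; ring. }
   rewrite !E4 in H1. unfold Dsum. lra. }
 fold X Y. rewrite EQ, EW2, EZ2. fold d1 Dsum.
 replace ((d1 + W2)^2 + Z2^2) with (d1^2 + 2 * d1 * W2 + (W2^2 + Z2^2)) by ring.
 assert (2 * d1 * W2 <= 2 * d1 * (1 - d1 - Dsum/4)) by (apply Rmult_le_compat_l; lra).
 nra. Qed.

Lemma Rabs_le_inv x b : Rabs x <= b -> - b <= x <= b.
Proof. intros H. destruct (Rcase_abs x); [rewrite Rabs_left in H|rewrite Rabs_right in H]; lra. Qed.

Lemma pow4_ge0 x : 0 <= x^4.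
Proof. replace (x^4) with ((x^2)^2) by ring. apply pow2_ge_0. Qed.

Lemma cos_b x : Rabs x <= 1 -> 1 - x^2/2 <= cos x <= 1 - x^2/2 + x^4/24.
Proof. intros H. pose proof PI2_1. apply Rabs_le_inv in H.
 destruct (cos_bound x 0) as [H1 H2]; try lra.
 replace (cos_approx x (2*0+1)) with (1 - x^2/2) in H1 by (unfold cos_approx, cos_term; simpl; field).
 replace (cos_approx x (2*(0+1))) with (1 - x^2/2 + x^4/24) in H2 by (unfold cos_approx, cos_term; simpl; field).
 lra. Qed.

Lemma sin_b_pos x : 0 <= x <= 1 -> Rabs (sin x - x) <= x^3/6.
Proof. intros H. pose proof PI2_1.
 destruct (sin_bound x 0) as [H1 H2]; try lra.
 replace (sin_approx x (2*0+1)) with (x - x^3/6) in H1 by (unfold sin_approx, sin_term; simpl; field).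
 replace (sin_approx x (2*(0+1))) with (x - x^3/6 + x^5/120) in H2 by (unfold sin_approx, sin_term; simpl; field).
 apply Rabs_le. assert (x^5 <= x^3).
 { assert (x^2 <= 1) by nra. assert (0 <= x^3) by (apply pow_le; lra).
   replace (x^5) with (x^3 * x^2) by ring. nra. }
 assert (0 <= x^5) by (apply pow_le; lra). lra. Qed.

Lemma sin_b x : Rabs x <= 1 -> Rabs (sin x - x) <= Rabs x ^3/6.
Proof. intros H. destruct (Rle_dec 0 x).
 - rewrite (Rabs_right x) in * by lra. apply sin_b_pos; lra.
 - rewrite (Rabs_left x) in * by lra. replace (sin x - x) with (- (sin (-x) - (-x))) by (rewrite sin_neg; ring).
   rewrite Rabs_Ropp. apply sin_b_pos; lra. Qed.



Lemma claim1_core r rs lam th :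
  0 < lam -> (1 <= rs <= r)%nat -> lam <= ln 4 ^ 2 ->
  20 <= 2 * Sl rs - Sl r <= 21 ->
  99/100 <= sumR1 (cf rs lam) r <= 1 ->
  INR r * Rabs th <= 1 -> th^2 * INR r^3 <= 1/100 -> th^2 <= 1/10000 ->
  Xs r rs lam th ^2 + Ys r rs lam th ^2 <= (sumR1 (cf rs lam) r)^2 /\
  sumR1 (cf rs lam) r - Xs r rs lam th <= 11 * lam * th^2.
Proof. intros Hl Hr Hl4 HS HP Hrt Hd Ht2.
 set (P := sumR1 (cf rs lam) r) in *. set (X := Xs r rs lam th). set (Y := Ys r rs lam th).
 assert (Hr1 : 1 <= INR r) by (apply (le_INR 1); lia).
 assert (Hlnj : forall j, 1 <= ln (INR j + 3)) by apply ln_pos_j.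
 assert (Hjr : forall j, (1 <= j <= r)%nat -> 1 <= INR j <= INR r).
 { intros j Hj. split; [apply (le_INR 1)|apply le_INR]; lia. }
 assert (Hx : forall j, (1 <= j <= r)%nat -> Rabs (INR j * th) <= 1).
 { intros j Hj. rewrite Rabs_mult, (Rabs_right (INR j)) by (pose proof (pos_INR j); lra).
   pose proof (Hjr j Hj). pose proof (Rabs_pos th). nra. }
 set (M2 := sumR1 (fun j => cf rs lam j * INR j ^ 2) r).
 assert (EM2 : M2 = lam * (2 * Sl rs - Sl r)).
 { unfold M2. transitivity (sumR1 (fun j => eps rs j * (lam * / ln (INR j + 3) ^ 2)) r).
   apply sumR1_ext. intros j Hj. unfold cf, dcoef. pose proof (Hjr j Hj). pose proof (Hlnj j). field. lra.
   rewrite sumR1_eps by lia. rewrite !sumR1_scal. unfold Sl. ring. }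
 set (E4 := sumR1 (fun j => dcoef lam j * (INR j * th)^4 / 24) r).
 assert (HA : Rabs (P - X - th^2 / 2 * M2) <= E4).
 { assert (P - X - th^2/2 * M2 = sumR1 (fun j => cf rs lam j * (1 - cos (INR j * th)) - cf rs lam j * (INR j * th)^2/2) r).
   { transitivity (sumR1 (fun j => cf rs lam j - cf rs lam j * cos (INR j * th) - th^2/2 * (cf rs lam j * INR j^2)) r).
     - rewrite !sumR1_minus, sumR1_scal. unfold P, X, Xs, M2. ring.
     - apply sumR1_ext; intros. cbv beta. field. }
   rewrite H. eapply Rle_trans. apply sumR1_abs. apply sumR1_le. intros j Hj.
   replace (cf rs lam j * (1 - cos (INR j * th)) - cf rs lam j * (INR j * th) ^ 2 / 2)
     with (- cf rs lam j * (cos (INR j * th) - (1 - (INR j * th)^2/2))) by field.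
   rewrite Rabs_mult, Rabs_Ropp, cf_abs by (auto; lia).
   pose proof (cos_b _ (Hx j Hj)). rewrite Rabs_right by lra.
   replace (dcoef lam j * (INR j * th) ^ 4 / 24) with (dcoef lam j * ((INR j * th) ^ 4 / 24)) by field.
   apply Rmult_le_compat_l. apply Rlt_le, dcoef_pos; auto; lia. lra. }
 assert (HE4 : E4 <= lam * th^2 * (th^2 * INR r ^ 3) / 24).
 { unfold E4. eapply Rle_trans. apply (sumR1_le _ (fun _ => lam * INR r^2 * th^4 / 24)).
   - intros j Hj. pose proof (Hjr j Hj). pose proof (Hlnj j). unfold dcoef.
     replace (lam / (INR j ^ 2 * ln (INR j + 3) ^ 2) * (INR j * th) ^ 4 / 24)
       with (lam * INR j ^2 * th^4 / 24 * / ln (INR j + 3) ^ 2) by (field; lra).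
     assert (0 < / ln (INR j + 3) ^ 2 <= 1). { split. apply Rinv_0_lt_compat; nra.
       rewrite <- Rinv_1. apply Rinv_le_contravar; nra. }
     assert (0 <= th^4) by apply pow4_ge0.
     assert (INR j ^2 <= INR r ^2) by (apply pow_incr; lra).
     assert (0 <= lam * INR j ^2 * th^4 / 24) by (apply Rmult_le_pos; [|lra]; apply Rmult_le_pos; [|lra]; apply Rmult_le_pos; [lra|]; apply pow_le; lra).
     assert (lam * INR j ^2 * th^4 / 24 <= lam * INR r ^2 * th^4 / 24).
     { unfold Rdiv. apply Rmult_le_compat_r. lra. apply Rmult_le_compat_r. auto. apply Rmult_le_compat_l; lra. }
     nra.
   - rewrite sumR1_const. right. field. }
 set (M1 := sumR1 (fun j => cf rs lam j * INR j) r).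
 set (T := sumR1 (fun j => / (INR j * ln (INR j + 3)^2)) r).
 assert (HT0 : 0 <= T).
 { apply sumR1_nonneg. intros j Hj. pose proof (Hjr j Hj). pose proof (Hlnj j).
   apply Rlt_le, Rinv_0_lt_compat. apply Rmult_lt_0_compat; nra. }
 assert (HM1 : Rabs M1 <= lam * T).
 { unfold M1. eapply Rle_trans. apply sumR1_abs. unfold T. rewrite <- sumR1_scal. right.
   apply sumR1_ext. intros j Hj. rewrite Rabs_mult, cf_abs by (auto;lia).
   rewrite (Rabs_right (INR j)) by (pose proof (pos_INR j); lra). unfold dcoef.
   pose proof (Hjr j Hj). pose proof (Hlnj j). field. lra. }
 set (E3 := sumR1 (fun j => dcoef lam j * Rabs (INR j * th)^3 / 6) r).
 assert (HY : Rabs (Y - th * M1) <= E3).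
 { assert (Y - th * M1 = sumR1 (fun j => cf rs lam j * (sin (INR j * th) - INR j * th)) r).
   { transitivity (sumR1 (fun j => cf rs lam j * sin (INR j * th) - th * (cf rs lam j * INR j)) r).
     - rewrite sumR1_minus, sumR1_scal. reflexivity.
     - apply sumR1_ext; intros; cbv beta; ring. }
   rewrite H. eapply Rle_trans. apply sumR1_abs. apply sumR1_le. intros j Hj.
   rewrite Rabs_mult, cf_abs by (auto; lia). pose proof (sin_b _ (Hx j Hj)).
   replace (dcoef lam j * Rabs (INR j * th) ^ 3 / 6) with (dcoef lam j * (Rabs (INR j * th) ^ 3 / 6)) by field.
   apply Rmult_le_compat_l. apply Rlt_le, dcoef_pos; auto; lia. lra. }
 assert (HE3 : E3 <= lam * Rabs th * (th^2 * INR r^3) / 6).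
 { unfold E3. eapply Rle_trans. apply (sumR1_le _ (fun _ => lam * INR r^2 * Rabs th^3 / 6)).
   - intros j Hj. pose proof (Hjr j Hj). pose proof (Hlnj j). unfold dcoef.
     rewrite Rabs_mult, (Rabs_right (INR j)) by lra.
     replace (lam / (INR j ^ 2 * ln (INR j + 3) ^ 2) * (INR j * Rabs th) ^ 3 / 6)
       with (lam * INR j * Rabs th^3 / 6 * / ln (INR j + 3) ^ 2) by (field; lra).
     assert (0 < / ln (INR j + 3) ^ 2 <= 1). { split. apply Rinv_0_lt_compat; nra.
       rewrite <- Rinv_1. apply Rinv_le_contravar; nra. }
     assert (0 <= Rabs th^3) by (apply pow_le, Rabs_pos).
     assert (INR j <= INR r ^2) by nra.
     assert (0 <= lam * INR j * Rabs th^3 / 6) by (apply Rmult_le_pos; [|lra]; apply Rmult_le_pos; [|lra]; apply Rmult_le_pos; lra).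
     assert (lam * INR j * Rabs th^3 / 6 <= lam * INR r ^2 * Rabs th^3 / 6).
     { unfold Rdiv. apply Rmult_le_compat_r. lra. apply Rmult_le_compat_r. auto. apply Rmult_le_compat_l; lra. }
     nra.
   - rewrite sumR1_const. right. rewrite <- (pow2_abs th). field. }
 pose proof (lamT2 lam r Hl Hl4) as HlT. fold T in HlT.
 set (dl := th^2 * INR r^3) in *.
 assert (Hdl0 : 0 <= dl) by (unfold dl; apply Rmult_le_pos; [apply pow2_ge_0|apply pow_le; lra]).
 assert (HM2 : 20 * lam <= M2 <= 21 * lam) by (rewrite EM2; split; nra).
 set (w := lam * th^2).
 assert (Hw0 : 0 <= w) by (unfold w; pose proof (pow2_ge_0 th); nra).
 assert (Hw : w <= 4 / 10000) by (unfold w; pose proof (pow2_ge_0 th); pose proof ln4_bounds; nra).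
 assert (HE4' : E4 <= w / 2400) by (unfold w; eapply Rle_trans; [apply HE4|]; 
   assert (0 <= lam * th^2) by nra; unfold Rdiv; nra).
 apply Rabs_le_inv in HA.
 assert (HA1 : 999/100 * w <= P - X) by (unfold w in *; nra).
 assert (HA2 : P - X <= 11 * lam * th^2) by (unfold w in *; nra).
 split; [|exact HA2].
 assert (HlT7 : lam * T <= 7).
 { assert ((lam * T)^2 <= 49) by (replace ((lam*T)^2) with (lam * (lam * T^2)) by ring; pose proof ln4_bounds; nra).
   nra. }
 assert (HYb : Rabs Y <= Rabs th * lam * (T + 1/600)).
 { apply Rabs_le_inv in HY. assert (Rabs (th * M1) <= Rabs th * (lam * T)).
   { rewrite Rabs_mult. apply Rmult_le_compat_l; auto. apply Rabs_pos. }
   assert (Rabs th * lam * (T + 1/600) = Rabs th * (lam * T) + lam * Rabs th / 600) by field.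
   assert (E3 <= lam * Rabs th / 600).
   { assert (0 <= lam * Rabs th) by (pose proof (Rabs_pos th); nra).
     assert (lam * Rabs th * dl <= lam * Rabs th * (1/100)) by (apply Rmult_le_compat_l; lra).
     unfold Rdiv in *. lra. }
   apply Rabs_le. apply Rabs_le_inv in H. lra. }
 assert (HY2 : Y^2 <= w * (lam * (T + 1/600)^2)).
 { rewrite <- pow2_abs. assert (0 <= Rabs Y) by apply Rabs_pos.
   apply Rle_trans with ((Rabs th * lam * (T + 1/600))^2). apply pow_incr; lra.
   unfold w. rewrite <- (pow2_abs th). right; ring. }
 assert (HB : lam * (T + 1/600)^2 <= 123/10).
 { replace (lam * (T + 1/600)^2) with (lam * T^2 + (lam * T) / 300 + lam / 360000) by field.
   pose proof ln4_bounds. nra. }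
 assert (HY3 : Y^2 <= 123/10 * w) by nra.
 assert (HAB : 999/100 * w * (197/100) <= (P - X) * (2 * P - (P - X))).
 { assert (11 * lam * th^2 = 11 * w) by (unfold w; ring).
   apply Rmult_le_compat; lra. }
 replace (X^2 + Y^2) with (P^2 - ((P - X) * (2 * P - (P - X))) + Y^2) by ring.
 lra.
Qed.

Lemma cos_34 x : PI/4 <= x <= PI -> cos x <= 3/4.
Proof. intros H. pose proof PI_RGT_0.
 assert (cos (PI/4) <= 3/4).
 { rewrite cos_PI4. assert (4/3 < sqrt 2).
   { rewrite <- (sqrt_square (4/3)) by lra. apply sqrt_lt_1; lra. }
   assert (0 < sqrt 2) by lra. apply (Rmult_le_reg_r (sqrt 2)); auto. field_simplify; lra. }
 destruct (Req_dec x (PI/4)). subst; auto.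
 assert (cos x < cos (PI/4)) by (apply cos_decreasing_1; lra). lra. Qed.

Lemma r_bounds a : 0 < a -> INR (r_of a) <= / sqrt a < INR (r_of a) + 1.
Proof. intros Ha. unfold r_of. set (R := / sqrt a).
 assert (0 < R) by (apply Rinv_0_lt_compat, sqrt_lt_R0; auto).
 destruct (base_Int_part R) as [H1 H2].
 assert (Hz : (0 <= Int_part R)%Z). { apply le_IZR. assert (-1 < IZR (Int_part R)) by lra.
   apply lt_IZR in H0. apply IZR_le. lia. }
 rewrite INR_IZR_INZ, Z2Nat.id by auto. lra. Qed.

Lemma up_nat x : 0 < x -> exists m : nat, x <= INR m <= x + 1.
Proof. intros Hx. destruct (archimed x) as [H1 H2].
 assert (Hz : (0 <= up x)%Z) by (apply le_IZR; lra).
 exists (Z.to_nat (up x)). rewrite INR_IZR_INZ, Z2Nat.id by auto. lra. Qed.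

Lemma exp_ge n : 2 ^ n <= exp (INR n).
Proof. induction n. simpl. rewrite exp_0. lra.
 rewrite S_INR, exp_plus. simpl pow. pose proof exp1_bounds. pose proof (pow_le 2 n). nra. Qed.

Lemma ln_le_n y n : 0 < y -> y <= 2 ^ n -> ln y <= INR n.
Proof. intros. apply ln_le_ub; auto. pose proof (exp_ge n). lra. Qed.

Lemma Dsum_lo lam lo hi : 0 < lam -> (1 <= lo <= hi)%nat ->
  (INR hi - INR lo + 1) * (lam / (INR hi ^ 2 * ln (INR hi + 3) ^ 2))
  <= sumR1 (dcoef lam) hi - sumR1 (dcoef lam) (lo - 1).
Proof. intros Hl Hlh.
 replace (INR hi - INR lo + 1) with (INR (hi - (lo - 1))) by (rewrite minus_INR by lia; rewrite minus_INR by lia; simpl; lra).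
 pose proof (sumR1_range_lo (dcoef lam) (lo - 1) (hi - (lo - 1)) (lam / (INR hi ^ 2 * ln (INR hi + 3) ^ 2))) as HH.
 replace (lo - 1 + (hi - (lo - 1)))%nat with hi in HH by lia. apply HH.
 intros j Hj. unfold dcoef.
 assert (1 <= INR j) by (apply (le_INR 1); lia). assert (INR j <= INR hi) by (apply le_INR; lia).
 pose proof (ln_pos_j j). assert (ln (INR j + 3) <= ln (INR hi + 3)) by (apply ln_le; lra).
 unfold Rdiv. apply Rmult_le_compat_l. lra. apply Rinv_le_contravar.
 apply Rmult_lt_0_compat; nra.
 apply Rmult_le_compat; try nra. Qed.

Lemma final2 f tl X Y P N D e : 0 <= f <= 1 -> 0 < tl -> tl * P = 1 -> P = 1 - 2 * N -> 0 <= N -> N <= 1/4 ->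
  X^2 + Y^2 <= 1 - D -> 0 <= D -> 0 <= e <= 1/2 -> 2 * N + e <= D / 2 ->
  sqrt ((f * tl * X)^2 + (f * tl * Y)^2) <= 1 - e.
Proof. intros Hf Ht HtP HP HN HN4 HQ HD He HDe.
 assert (Hb : tl * (1 - D/2) <= 1 - e).
 { assert (tl = / P) by (field_simplify_eq; [|lra]; lra). 
   apply (Rmult_le_reg_l P). lra. replace (P * (tl * (1 - D/2))) with (1 - D/2) by (rewrite <- Rmult_assoc, (Rmult_comm P), HtP; ring).
   rewrite HP. nra. }
 rewrite <- (sqrt_pow2 (1 - e)) by lra. apply sqrt_le_1_alt.
 replace ((f * tl * X)^2 + (f * tl * Y)^2) with ((f*tl)^2 * (X^2+Y^2)) by ring.
 assert ((f * tl)^2 <= tl^2) by (apply pow_incr; nra).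
 assert (0 <= X^2 + Y^2) by nra.
 apply Rle_trans with (tl^2 * (X^2 + Y^2)). apply Rmult_le_compat_r; auto.
 apply Rle_trans with (tl^2 * (1 - D/2)^2). apply Rmult_le_compat_l. nra. nra.
 replace (tl^2 * (1 - D/2)^2) with ((tl * (1 - D/2))^2) by ring. apply pow_incr.
 split; [|auto]. destruct (Rle_dec 0 (1 - D/2)). nra. exfalso. nra. Qed.

Lemma case_c_bound M tau lam l Lh : 0 < tau -> / (8 * tau) <= M <= / (8 * tau) + 1 -> 2 <= / (8 * tau) ->
  1 <= Lh <= l -> 1/2 <= lam ->
  tau / (2 * l^2) <= (M + 1) * (lam / ((2 * M + 1)^2 * Lh^2)).
Proof. intros Ht HM H2 HL Hl.
 assert (HM1 : 4 * tau * (M + 1) <= 1).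
 { assert (M + 1 <= / (4 * tau)). { replace (/ (4 * tau)) with (2 * / (8 * tau)) by (field; lra). lra. }
   apply Rle_trans with (4 * tau * / (4 * tau)). apply Rmult_le_compat_l; lra. right; field; lra. }
 assert (0 < M) by lra.
 assert (Hsq : (2 * M + 1)^2 <= 4 * (M + 1)^2) by nra.
 assert (0 < Lh^2) by nra. assert (Lh^2 <= l^2) by (apply pow_incr; lra).
 apply Rle_trans with ((M + 1) * ((1/2) / (4 * (M + 1)^2 * l^2))).
 - replace ((M + 1) * (1 / 2 / (4 * (M + 1) ^ 2 * l ^ 2))) with ((1/ (4 * (M+1))) / (2 * l^2)) by (field; split; nra).
   unfold Rdiv. apply Rmult_le_compat_r. apply Rlt_le, Rinv_0_lt_compat; nra.
   apply (Rmult_le_reg_r (4 * (M+1))). nra. replace (1 * / (4 * (M + 1)) * (4 * (M + 1))) with 1 by (field; lra). lra.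
 - apply Rmult_le_compat_l. lra. unfold Rdiv. apply Rmult_le_compat. lra.
   apply Rlt_le, Rinv_0_lt_compat; nra. auto.
   apply Rinv_le_contravar. apply Rmult_lt_0_compat; nra. apply Rmult_le_compat; nra. Qed.

Lemma cos_shift j t : cos (INR j * (2 * PI * t) - 2 * PI * t) = cos (2 * PI * (INR j - 1) * Rabs t).
Proof. destruct (Rle_dec 0 t). rewrite Rabs_right by lra. f_equal. ring.
 rewrite Rabs_left by lra. rewrite <- cos_neg. f_equal. ring. Qed.

Theorem lemma7 :
  exists c4 c5 C6 : R, 0 < c4 /\ 0 < c5 /\ 0 < C6 /\
  exists a0 : R, 0 < a0 /\
  forall a : R, 0 < a < a0 ->
  forall rstar : nat, (1 <= rstar <= r_of a)%nat ->
  20 <= sumR1 (fun j => / ln (INR j + 3) ^ 2) rstar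
        - (sumR1 (fun j => / ln (INR j + 3) ^ 2) (r_of a)
           - sumR1 (fun j => / ln (INR j + 3) ^ 2) rstar) <= 21 ->
  forall lam : R, 0 < lam ->
  sumR1 (fun j => dcoef lam j) (r_of a) = 1 ->
  forall tlam : R, 0 < tlam ->
  htilde (r_of a) rstar lam tlam (RtoC 1) = RtoC 1 ->
  (forall t : R, Rabs t <= c4 * a ->
     G a (hfun a (r_of a) rstar lam tlam (cexpi (2 * PI * t)))) /\
  (forall t : R, -1/2 <= t <= 1/2 -> ~ (- (C6 * sqrt a) <= t <= C6 * sqrt a) ->
     Cmod (hfun a (r_of a) rstar lam tlam (cexpi (2 * PI * t)))
       <= 1 - c5 * Rabs t / ln (/ a) ^ 2).
Proof.
 exists (1/1000), (1/10000), (2^17).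
 split; [lra|split;[lra|split;[apply pow_lt; lra|]]].
 exists (/ 2^80). split. apply Rinv_0_lt_compat, pow_lt; lra.
 intros a Ha rs Hrs HS lam Hlam Hsum tlam Htlam Hh1.
 change (sumR1 (fun j => / ln (INR j + 3) ^ 2) rs) with (Sl rs) in HS.
 change (sumR1 (fun j => / ln (INR j + 3) ^ 2) (r_of a)) with (Sl (r_of a)) in HS.
 change (sumR1 (fun j => dcoef lam j) (r_of a)) with (sumR1 (dcoef lam) (r_of a)) in Hsum.
 pose proof (r_bounds a ltac:(lra)) as Hrb.
 set (r := r_of a) in *.
 pose proof PI_RGT_0 as Hpi0. pose proof PI_4 as Hpi4.
 set (q := sqrt a).
 assert (Hq0 : 0 < q) by (apply sqrt_lt_R0; lra).
 assert (Hqq : q * q = a) by (apply sqrt_sqrt; lra).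
 set (R := / q) in *.
 assert (HRq : R * q = 1) by (unfold R; field; lra).
 assert (Hq40 : q < / 2^40).
 { destruct (Rlt_dec q (/ 2^40)); auto. exfalso.
   assert (/2^40 * /2^40 <= q * q) by (apply Rmult_le_compat; try lra; apply Rlt_le, Rinv_0_lt_compat, pow_lt; lra).
   replace (/2^40 * /2^40) with (/ 2^80) in H by (field; apply pow_nonzero; lra). lra. }
 assert (HR40 : 2^40 <= R).
 { unfold R. rewrite <- (Rinv_inv (2^40)). apply Rlt_le, Rinv_lt_contravar; auto.
   apply Rmult_lt_0_compat; auto. apply Rinv_0_lt_compat, pow_lt; lra. }
 assert (Hq12 : q <= 1/10^12).
 { assert (10^12 <= 2^40) by lra. apply Rle_trans with (/2^40). lra.
   unfold Rdiv. rewrite Rmult_1_l. apply Rinv_le_contravar. apply pow_lt; lra. auto. }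
 assert (Ha1 : a < 1) by nra.
 assert (Hr1 : (1 <= r)%nat) by lia.
 destruct (lam_bounds lam r Hlam Hr1 Hsum) as [Hlam1 Hlam4].
 pose proof ln4_bounds as Hln4.
 assert (Hlam4' : lam <= 4) by nra.
 pose proof (htilde1 _ _ _ _ Hh1) as HtP. fold r in HtP.
 set (P := sumR1 (cf rs lam) r) in *.
 set (N := sumR1 (dcoef lam) r - sumR1 (dcoef lam) rs).
 assert (EP : P = 1 - 2 * N).
 { unfold P, N, cf. rewrite (sumR1_eps rs (dcoef lam) r) by lia. lra. }
 assert (HN0 : 0 <= N).
 { unfold N. assert (sumR1 (dcoef lam) rs <= sumR1 (dcoef lam) r). apply sumR1_mono. lia.
   intros. apply Rlt_le, dcoef_pos; auto; lia. lra. }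
 assert (Hrs34 : R / 34 <= INR rs).
 { apply (rs_large R r rs); auto. lia. lra. }
 set (l := ln R).
 assert (Hl20 : 20 <= l).
 { unfold l. apply Rle_trans with (ln (2^40)). rewrite ln_pow by lra. pose proof ln_lt_2.
   replace (INR 40) with 40 by (simpl; lra). lra. apply ln_le. apply pow_lt; lra. auto. }
 assert (Hlrs : l / 2 <= ln (INR rs + 4)).
 { assert (ln 34 <= 6).
   { pose proof (ln_le_n 34 6 ltac:(lra) ltac:(simpl; lra)) as H6. replace (INR 6) with 6 in H6 by (simpl; lra). auto. }
   assert (ln (R / 34) <= ln (INR rs + 4)) by (apply ln_le; lra).
   rewrite ln_div in H0 by lra. fold l in H0. lra. }
 assert (HNb : N <= 544 * q / l^2).
 { eapply Rle_trans. apply (N_bound lam rs r Hlam). lia.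
   assert (0 < l / 2) by lra.
   assert ((l/2)^2 <= ln (INR rs + 4) ^2) by (apply pow_incr; lra).
   assert (0 < INR rs) by lra.
   assert (/ INR rs <= 34 * q). { apply Rle_trans with (/ (R / 34)). apply Rinv_le_contravar; lra.
     right. unfold R. field. lra. }
   assert (lam / ln (INR rs + 4) ^ 2 <= 4 / (l/2)^2).
   { unfold Rdiv. apply Rmult_le_compat. lra. apply Rlt_le, Rinv_0_lt_compat. nra. lra.
     apply Rinv_le_contravar. nra. auto. }
   apply Rle_trans with (4 / (l/2)^2 * (34 * q)). apply Rmult_le_compat; auto.
   apply Rdiv_le_0_compat; nra. apply Rlt_le, Rinv_0_lt_compat; lra.
   right. field. lra. }
 set (L := ln (/ a)).
 assert (EL : L = 2 * l).
 { unfold L, l. replace (/ a) with (R * R) by (unfold R; rewrite <- Hqq; field; lra).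
   rewrite ln_mult by lra. ring. }
 assert (HNs : N <= 1/1000) by (assert (544 * q / l^2 <= 544 * q / 400) by
   (unfold Rdiv; apply Rmult_le_compat_l; [lra|]; apply Rinv_le_contravar; nra); lra).
 assert (HP99 : 99/100 <= P <= 1) by lra.
 assert (Htl : tlam <= 100/99) by (apply (Rmult_le_reg_r P); nra).
 assert (HS2 : 20 <= 2 * Sl rs - Sl r <= 21) by lra.
 assert (Hrsr : (rs <= r)%nat) by lia.
 split.
 -
   intros t Ht. set (th := 2 * PI * t).
   assert (Hth : Rabs th <= 8 * a / 1000).
   { unfold th. rewrite !Rabs_mult. rewrite (Rabs_right 2), (Rabs_right PI) by lra.
     assert (2 * PI * Rabs t <= 2 * 4 * Rabs t) by (apply Rmult_le_compat_r; [apply Rabs_pos| lra]). lra. }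
   assert (Hth2 : th^2 <= 64 * a^2 / 10^6).
   { rewrite <- pow2_abs. pose proof (Rabs_pos th).
     replace (64 * a^2 / 10^6) with ((8 * a / 1000)^2) by field. apply pow_incr; lra. }
   assert (HrR : INR r <= R) by (unfold R, q; lra).
   assert (Hr0 : 1 <= INR r) by (apply (le_INR 1); lia).
   assert (HaR : R * a = q) by (rewrite <- Hqq, <- Rmult_assoc, HRq; ring).
   assert (H1 : INR r * Rabs th <= 1).
   { apply Rle_trans with (R * (8 * a / 1000)). apply Rmult_le_compat; try lra. apply Rabs_pos.
     replace (R * (8 * a / 1000)) with (8 * (R * a) / 1000) by field. rewrite HaR. lra. }
   assert (H2 : th^2 * INR r^3 <= 1/100).
   { apply Rle_trans with (64 * a^2 / 10^6 * R^3). apply Rmult_le_compat; try lra.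
     apply pow2_ge_0. apply pow_le; lra. apply pow_incr; lra.
     replace (64 * a^2 / 10^6 * R^3) with (64 * (R * a)^2 * R / 10^6) by field.
     rewrite HaR. assert (Eq2 : q^2 * R = q) by (replace (q^2 * R) with (q * (R * q)) by ring; rewrite HRq; ring).
     replace (64 * q^2 * R / 10^6) with (64 * (q^2 * R) / 10^6) by field. rewrite Eq2. lra. }
   assert (Haa : a^2 <= 1) by (assert (a*a <= 1*1) by (apply Rmult_le_compat; lra); simpl; lra).
   assert (H3 : th^2 <= 1/10000) by lra.
   destruct (claim1_core r rs lam th Hlam ltac:(lia) Hlam4 HS2 HP99 H1 H2 H3) as [HQ HPX].
   fold P in HQ. fold P in HPX. rewrite hfun_cexpi.
   set (X := Xs r rs lam th) in *. set (Y := Ys r rs lam th) in *.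
   set (f := 1 - a^10).
   set (x := f * tlam * X). set (y := f * tlam * Y).
   cut (0 < 1 - (x^2 + y^2) /\ 1 - (x^2 + y^2) < 2 * (x - cos a)).
   { intros [C1 C2]. apply G_suff; auto; lra. }
   assert (Haq : a <= 1/10^24) by (rewrite <- Hqq; replace (1/10^24) with (1/10^12 * (1/10^12)) by field;
     apply Rmult_le_compat; lra).
   assert (Ha8 : a^8 <= 1/1000).
   { assert (a^7 <= 1^7) by (apply pow_incr; lra). replace (a^8) with (a * a^7) by ring.
     rewrite pow1 in H. assert (0 <= a^7) by (apply pow_le; lra).
     replace (1/1000) with (1/1000 * 1) by ring. apply Rmult_le_compat; lra. }
   assert (Ha10 : 0 < a^10 <= a^2 / 1000).
   { split. apply pow_lt; lra. replace (a^10) with (a^2 * a^8) by ring.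
     assert (0 <= a^2) by apply pow2_ge_0. replace (a^2/1000) with (a^2 * (1/1000)) by field.
     apply Rmult_le_compat_l; lra. }
   assert (Ha2 : 0 < a^2) by (apply pow_lt; lra).
   assert (Hf : 0 < f < 1) by (unfold f; lra).
   assert (HQ1 : tlam^2 * (X^2 + Y^2) <= 1).
   { replace 1 with (tlam^2 * P^2) by (replace (tlam^2 * P^2) with ((tlam * P)^2) by ring; rewrite HtP; ring).
     apply Rmult_le_compat_l. apply pow2_ge_0. auto. }
   assert (Eg : x^2 + y^2 = f^2 * (tlam^2 * (X^2 + Y^2))) by (unfold x, y; ring).
   assert (HQ0 : 0 <= tlam^2 * (X^2 + Y^2)) by (apply Rmult_le_pos; [apply pow2_ge_0|pose proof (pow2_ge_0 X); pose proof (pow2_ge_0 Y); lra]).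
   split.
   + rewrite Eg. assert (f^2 < 1) by (assert (f * f < 1 * f) by (apply Rmult_lt_compat_r; lra); simpl; lra).
     assert (f^2 * (tlam^2 * (X^2 + Y^2)) <= f^2 * 1) by (apply Rmult_le_compat_l; [apply pow2_ge_0|auto]). lra.
   + assert (HtX : 1 - 3 * a^2 / 1000 <= tlam * X).
     { assert (tlam * X = 1 - tlam * (P - X)) by (rewrite Rmult_minus_distr_l, HtP; ring).
       assert (tlam * (P - X) <= 45 * th^2).
       { destruct (Rle_dec 0 (P - X)).
         - apply Rle_trans with (100/99 * (11 * lam * th^2)). apply Rmult_le_compat; lra.
           assert (0 <= th^2) by apply pow2_ge_0.
           assert (lam * th^2 <= 4 * th^2) by (apply Rmult_le_compat_r; lra). lra.
         - assert (0 <= th^2) by apply pow2_ge_0.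
           assert (tlam * (P - X) <= 0). { assert (tlam * (0 - (P - X)) >= 0) by (apply Rle_ge, Rmult_le_pos; lra). lra. }
           lra. }
       lra. }
     assert (Hx : 1 - 4 * a^2 / 1000 <= x).
     { unfold x. rewrite Rmult_assoc. apply Rle_trans with (f * (1 - 3 * a^2/1000)).
       unfold f. assert (0 <= a^10 * (3 * a^2 / 1000)) by (apply Rmult_le_pos; lra).
       replace ((1 - a^10) * (1 - 3*a^2/1000)) with (1 - 3*a^2/1000 - a^10 + a^10 * (3*a^2/1000)) by field. lra.
       apply Rmult_le_compat_l; lra. }
     assert (Hx2 : (1 - 4 * a^2 / 1000)^2 <= x^2) by (apply pow_incr; lra).
     assert (Hcos : cos a <= 1 - a^2/2 + a^4/24).
     { apply cos_b. rewrite Rabs_right; lra. }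
     assert (Ha4 : a^4 <= a^2) by (replace (a^4) with (a^2 * a^2) by ring; rewrite <- (Rmult_1_r (a^2)) at 3; apply Rmult_le_compat_l; lra).
     assert (0 <= y^2) by apply pow2_ge_0.
     assert (Ea : (1 - 4 * a^2 / 1000)^2 = 1 - 8 * a^2 / 1000 + 16 * a^4 / 10^6) by field.
     assert (0 <= a^4) by apply pow4_ge0.
     lra.
 -
   intros t Ht Hnot. set (tau := Rabs t).
   assert (Htau : 2^17 * q < tau).
   { destruct (Rlt_dec (2^17 * q) tau); auto. exfalso. apply Hnot. fold q.
     unfold tau in n. destruct (Rcase_abs t); [rewrite Rabs_left in n|rewrite Rabs_right in n]; lra. }
   assert (Htau2 : tau <= 1/2) by (unfold tau; apply Rabs_le; lra).
   assert (Htau0 : 0 < tau) by (assert (0 < 2^17 * q) by (apply Rmult_lt_0_compat; [apply pow_lt|]; lra); lra).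
   rewrite hfun_cexpi. unfold Cmod. cbn [fst snd].
   set (X := Xs r rs lam (2 * PI * t)). set (Y := Ys r rs lam (2 * PI * t)).
   fold L. fold tau.
   assert (HL40 : 40 <= L) by lra.
   set (iL := / L^2).
   assert (HiL : 0 < iL <= 1/1600).
   { unfold iL. split. apply Rinv_0_lt_compat; nra.
     replace (1/1600) with (/ 1600) by field. apply Rinv_le_contravar; nra. }
   assert (HNi : 2 * N <= 4352 * (q * iL)).
   { assert (544 * q / l^2 = 2176 * (q * iL)) by (unfold iL; rewrite EL; field; lra). lra. }
   assert (Ee : 1 / 10000 * tau / L^2 = (tau * iL) / 10000) by (unfold iL; field; lra).
   rewrite Ee.
   set (d1 := dcoef lam 1).
   assert (Hd1 : 1/8 <= d1).
   { unfold d1, dcoef. replace (INR 1) with 1 by reflexivity. replace (1 + 3) with 4 by ring.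
     apply Rle_trans with ((1/2) / 4). lra. unfold Rdiv. apply Rmult_le_compat. lra. lra. lra.
     apply Rinv_le_contravar. lra. nra. }
   assert (Hrs2 : (3 <= rs)%nat).
   { assert (3 < INR rs) by lra. destruct (le_lt_dec 3 rs); auto.
     assert (INR rs <= INR 2) by (apply le_INR; lia). simpl in H0. lra. }
   assert (HtiL : 0 <= tau * iL) by (apply Rmult_le_pos; lra).
   assert (HqiL : 0 <= q * iL) by (apply Rmult_le_pos; lra).
   assert (HD : exists D, 0 <= D /\ X^2 + Y^2 <= 1 - D /\ 2 * N + tau * iL / 10000 <= D / 2).
   { assert (Hq12' : q * iL <= 1/10^12 * (1/1600)) by (apply Rmult_le_compat; lra).
     destruct (Rle_dec (1/16) tau) as [Hbig|Hsmall].
     - assert (HDg : exists lo, (2 <= lo <= 3)%nat /\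
          (forall j, (lo <= j <= lo)%nat -> cos (INR j * (2*PI*t) - 2*PI*t) <= 3/4)).
       { destruct (Rle_dec (1/8) tau).
         - exists 2%nat. split. lia. intros j Hj. replace j with 2%nat by lia. rewrite cos_shift. fold tau.
           apply cos_34. replace (INR 2 - 1) with 1 by (simpl; ring). split; nra.
         - exists 3%nat. split. lia. intros j Hj. replace j with 3%nat by lia. rewrite cos_shift. fold tau.
           apply cos_34. replace (INR 3 - 1) with 2 by (simpl; ring). split; nra. }
       destruct HDg as [lo [Hlo Hcos]].
       pose proof (Q_bound r rs lam (2*PI*t) lo lo Hlam ltac:(lia) Hsum ltac:(lia) ltac:(lia) Hcos) as HQb.
       fold X Y d1 in HQb.
       pose proof (Dsum_lo lam lo lo Hlam ltac:(lia)) as HDs.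
       set (Dsum := sumR1 (dcoef lam) lo - sumR1 (dcoef lam) (lo - 1)) in *.
       assert (Hds : 1/162 <= Dsum).
       { eapply Rle_trans; [|apply HDs]. replace (INR lo - INR lo + 1) with 1 by ring.
         assert (Hlo3 : 2 <= INR lo <= 3).
         { pose proof (le_INR lo 3 ltac:(lia)). pose proof (le_INR 2 lo ltac:(lia)).
           replace (INR 3) with 3 in * by (simpl; ring). replace (INR 2) with 2 in * by (simpl; ring). lra. }
         assert (1 <= ln (INR lo + 3) <= 3).
         { split. apply ln_pos_j. pose proof (ln_le_n (INR lo + 3) 3 ltac:(lra) ltac:(simpl; lra)) as H9.
           replace (INR 3) with 3 in H9 by (simpl; lra). auto. }
         assert (INR lo ^2 * ln (INR lo + 3)^2 <= 81).
         { replace 81 with (9 * 9) by ring. apply Rmult_le_compat. apply pow2_ge_0. apply pow2_ge_0.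
           nra. nra. }
         assert (0 < INR lo ^2 * ln (INR lo + 3)^2) by (apply Rmult_lt_0_compat; nra).
         rewrite Rmult_1_l. apply Rle_trans with ((1/2) / 81). lra. unfold Rdiv.
         apply Rmult_le_compat; try lra. apply Rinv_le_contravar; lra. }
       exists (d1 * Dsum / 2). split. apply Rmult_le_pos; [apply Rmult_le_pos|]; lra.
       split. auto.
       assert (1/8 * (1/162) <= d1 * Dsum) by (apply Rmult_le_compat; lra).
       assert (tau * iL <= 1/2 * (1/1600)) by (apply Rmult_le_compat; lra).
       lra.
     - assert (Hm8 : 0 < / (8 * tau)) by (apply Rinv_0_lt_compat; lra).
       destruct (up_nat (/ (8 * tau)) Hm8) as [m Hm].
       set (M := INR m) in *.
       assert (H8 : 2 <= / (8 * tau)).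
       { replace 2 with (/ (1/2)) by field. apply Rinv_le_contravar; lra. }
       assert (Hm1 : (1 <= m)%nat). { destruct m. unfold M in Hm. simpl in Hm. lra. lia. }
       assert (EM : forall k, INR (k * m + 1) = INR k * M + 1).
       { intros k. rewrite plus_INR, mult_INR. simpl (INR 1). fold M. ring. }
       set (hi := (2 * m + 1)%nat). set (lo := (1 * m + 1)%nat).
       assert (Ehi : INR hi = 2 * M + 1) by (unfold hi; rewrite EM; simpl (INR 2); ring).
       assert (Elo : INR lo = M + 1) by (unfold lo; rewrite EM; simpl (INR 1); ring).
       assert (HiR : / (4 * tau) <= R / 2^19).
       { apply Rle_trans with (/ (4 * (2^17 * q))). apply Rinv_le_contravar.
         apply Rmult_lt_0_compat; [lra|]. apply Rmult_lt_0_compat; [apply pow_lt|]; lra. lra.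
         right. unfold R. field. lra. }
       assert (H4t : / (4 * tau) = 2 * / (8 * tau)) by (field; lra).
       assert (HhiR : 2 * M + 1 <= R / 2^19 + 3) by lra.
       assert (Hhirs : (hi <= rs)%nat).
       { apply INR_le. rewrite Ehi. lra. }
       assert (HMt : 1/8 <= M * tau <= 1/8 + tau).
       { split.
         - apply Rle_trans with (/ (8 * tau) * tau). right; field; lra. apply Rmult_le_compat_r; lra.
         - apply Rle_trans with ((/ (8 * tau) + 1) * tau). apply Rmult_le_compat_r; lra. right; field; lra. }
       assert (Hcos : forall j, (lo <= j <= hi)%nat -> cos (INR j * (2*PI*t) - 2*PI*t) <= 3/4).
       { intros j Hj. rewrite cos_shift. fold tau. apply cos_34.
         assert (Hj1 : M + 1 <= INR j <= 2 * M + 1) by (rewrite <- Elo, <- Ehi; split; apply le_INR; lia).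
         assert (Hy : M * tau <= (INR j - 1) * tau <= 2 * M * tau) by (split; apply Rmult_le_compat_r; lra).
         replace (2 * PI * (INR j - 1) * tau) with (PI * (2 * ((INR j - 1) * tau))) by ring.
         split.
         - replace (PI / 4) with (PI * (1/4)) by field. apply Rmult_le_compat_l; lra.
         - rewrite <- (Rmult_1_r PI) at 2. apply Rmult_le_compat_l; lra. }
       pose proof (Q_bound r rs lam (2*PI*t) lo hi Hlam ltac:(lia) Hsum ltac:(unfold lo, hi; lia) Hhirs Hcos) as HQb.
       fold X Y d1 in HQb.
       pose proof (Dsum_lo lam lo hi Hlam ltac:(unfold lo, hi; lia)) as HDs.
       set (Dsum := sumR1 (dcoef lam) hi - sumR1 (dcoef lam) (lo - 1)) in *.
       rewrite Ehi, Elo in HDs.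
       replace (2 * M + 1 - (M + 1) + 1) with (M + 1) in HDs by ring.
       assert (HLh : 1 <= ln (2 * M + 1 + 3) <= l).
       { split. apply ln_ge1; lra. unfold l. apply ln_le; lra. }
       pose proof (case_c_bound M tau lam l (ln (2 * M + 1 + 3)) Htau0 ltac:(lra) H8 HLh Hlam1) as Hcc.
       assert (E2 : tau / (2 * l^2) = 2 * (tau * iL)) by (unfold iL; rewrite EL; field; lra).
       assert (Hds : 2 * (tau * iL) <= Dsum) by lra.
       exists (d1 * Dsum / 2). split. apply Rmult_le_pos; [apply Rmult_le_pos|]; lra.
       split. auto.
       assert (1/8 * (2 * (tau * iL)) <= d1 * Dsum) by (apply Rmult_le_compat; lra).
       assert (2^17 * q * iL <= tau * iL) by (apply Rmult_le_compat_r; lra).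
       assert (2^17 * q * iL = 2^17 * (q * iL)) by ring.
       lra. }
   destruct HD as [D [HD0 [HQD HDe]]].
   apply (final2 (1 - a^10) tlam X Y P N D ((tau * iL)/10000)); auto.
   + assert (0 < a^10) by (apply pow_lt; lra). assert (a^10 <= 1^10) by (apply pow_incr; lra). rewrite pow1 in H0. lra.
   + lra.
   + split. lra. assert (tau * iL <= 1/2 * (1/1600)) by (apply Rmult_le_compat; lra). lra.
Qed.
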